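(* In the multi-authority model described in the context (under the standing assumptions stated there), all authorities using their privately optimal adaptive priority mechanisms $\{A^*_c\}$, $A^*_{m,c}(y_m,s)=h^{-1}(h(s)+u_{m,c}'(y_m))$, is not necessarily efficient: there exists an economy in which the resulting matching (each authority admitting, from the agents who demand it, the set selected by $A^*_c$) does not maximize total authority utility $\sum_{c\in\bar{\mathcal C}}\xi_c$ among matchings, so the mechanism selecting this outcome is not efficient.
   Context: Authorities $\mathcal C=\{c_0,\dots\}$ with dummy $c_0$ (unmatched), $\bar{\mathcal C}=\mathcal C\setminus\{c_0\}$, capacities $q_c$; agents have types $\theta=(s,m,\succ)$ with scores, group $m\in\mathcal M$ (finite) and strict preferences over $\mathcal C$; a state $\omega$ specifies the type measure. Authority $c\in\bar{\mathcal C}$ has utility $\xi_c(\bar s_{h_c},x_c)=g_c(\bar s_{h_c}+\sum_mu_{m,c}(x_{m,c}))$ over its admitted set ($\bar s_{h_c}$ integral of $h_c(\text{score})$ over admitted agents, $x_{m,c}$ admitted measure of group $m$). Standing assumptions in this setting: scores are common across authorities ($s_c(\theta)=s_{c'}(\theta)$), $h_c=h$ continuous strictly increasing, $g_c$ is the identity, $u_{m,c}$ strictly concave and differentiable with $\lim_{x\to0^+}u_{m,c}'(x)=\infty$, and every type ranks $c_0$ below every $c\in\bar{\mathcal C}$. A mechanism maps each state to a matching; its total authority value under beliefs $\Lambda$ over states is $\Xi_T(\phi,\Lambda)=\sum_{c\in\bar{\mathcal C}}\int\xi_c(\phi(\omega))d\Lambda(\omega)$; $\phi^*$ is efficient if $\Xi_T(\phi^*,\Lambda)=\sup_\phi\Xi_T(\phi,\Lambda)$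 for all $\Lambda$. When every authority uses $A^*_c$ (admits the set $\mu$ such that an applicant $\theta$ is admitted iff for all non-admitted applicants $\theta'$, $A^*_{m(\theta),c}(x_{m(\theta)},s(\theta))>A^*_{m(\theta'),c}(x_{m(\theta')},s(\theta'))$, with admitted measure equal to capacity), the outcome is the unique stable matching. *)

(* Defs.v *)
From HB Require Import structures.
From mathcomp Require Import all_boot all_order all_algebra.
From mathcomp Require Import all_classical all_reals all_analysis.
Unset Printing Implicit Defensive.
Import Order.TTheory GRing.Theory Num.Theory.
Import numFieldNormedType.Exports.
Local Open Scope classical_set_scope.
Local Open Scope ring_scope.

Definition strictly_concave_nonneg {R : realType} (f : R -> R) : Prop :=
  forall x y t : R, 0 <= x -> 0 <= y -> x != y -> 0 < t -> t < 1 ->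
    t * f x + (1 - t) * f y < f (t * x + (1 - t) * y).

(* An economy (one state omega) of the multi-authority model, under the
   standing assumptions: common scores, g_c = identity, h continuous strictly
   increasing (here moreover a bijection R -> R, with inverse hinv, so that
   A*_{m,c} = hinv (h s + u'(y)) is defined), u_{m,c} strictly concave,
   differentiable, Inada at 0+, every agent ranks c0 last. Agents form an
   abstract measure space; their types (s, m, >) are given by
   score/group/rank, and rank t is an injective ranking of authorities
   (smaller = preferred), i.e. a strict preference. *)
Record economy (R : realType) := Economy {
  disp : measure_display;
  agent : measurableType disp;
  omega : {finite_measure set agent -> \bar R};
  auth : finType;
  c0 : auth;
  grp : finType;
  cap : auth -> R;
  score : agent -> R;
  group : agent -> grp;
  rank : agent -> auth -> nat;
  h : R -> R;
  hinv : R -> R;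
  u : grp -> auth -> R -> R;
  cap_ge0 : forall c, 0 <= cap c;
  score_meas : measurable_fun setT score;
  group_meas : forall m, measurable (group @^-1` [set m]);
  rank_meas : forall c c', measurable [set t | (rank t c < rank t c')%N];
  rank_inj : forall t, injective (rank t);
  c0_worst : forall t c, c != c0 -> (rank t c < rank t c0)%N;
  h_cont : continuous h;
  h_incr : {mono h : x y / x < y};
  hK : cancel h hinv;
  hinvK : cancel hinv h;
  hs_int : omega.-integrable setT (fun t => (h (score t))%:E);
  u_concave : forall m c, strictly_concave_nonneg (u m c);
  u_diff : forall m c x, 0 < x -> derivable (u m c) x 1;
  u_inada : forall m c, derive1 (u m c) x @[x --> 0^'+] --> +oo
}.

Arguments disp {R} e.
Arguments agent {R} e.
Arguments omega {R} e.
Arguments auth {R} e.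
Arguments c0 {R} e.
Arguments grp {R} e.
Arguments cap {R} e.
Arguments score {R} e.
Arguments group {R} e.
Arguments rank {R} e.
Arguments h {R} e.
Arguments hinv {R} e.
Arguments u {R} e.
Arguments cap_ge0 {R} e.
Arguments score_meas {R} e.
Arguments group_meas {R} e.
Arguments rank_meas {R} e.
Arguments rank_inj {R} e.
Arguments c0_worst {R} e.
Arguments h_cont {R} e.
Arguments h_incr {R} e.
Arguments hK {R} e.
Arguments hinvK {R} e.
Arguments hs_int {R} e.
Arguments u_concave {R} e.
Arguments u_diff {R} e.
Arguments u_inada {R} e.

Set Implicit Arguments. Unset Strict Implicit.

Section Model.
Variables (R : realType) (E : economy R).

(* a matching assigns each agent an authority (c0 = unmatched) *)
Definition admitted (mu : agent E -> auth E) (c : auth E) : set (agent E) :=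
  mu @^-1` [set c].

Definition is_matching (mu : agent E -> auth E) : Prop :=
  (forall c, measurable (admitted mu c)) /\
  (forall c, c != c0 E -> (omega E (admitted mu c) <= (cap E c)%:E)%E).

Definition xmeas (mu : agent E -> auth E) (m : grp E) (c : auth E) : R :=
  fine (omega E (admitted mu c `&` group E @^-1` [set m])).

Definition sbar (mu : agent E -> auth E) (c : auth E) : R :=
  fine (\int[omega E]_(t in admitted mu c) (h E (score E t))%:E).

Definition xi (mu : agent E -> auth E) (c : auth E) : R :=
  sbar mu c + \sum_(m : grp E) u E m c (xmeas mu m c).

Definition total_value (mu : agent E -> auth E) : R :=
  \sum_(c : auth E | c != c0 E) xi mu c.

(* A*_{m,c}(y, s) = h^{-1}(h(s) + u'_{m,c}(y)); equal to +oo at y = 0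
   (since u'(0+) = +oo and hinv is unbounded). *)
Definition Astar (m : grp E) (c : auth E) (y s : R) : \bar R :=
  if 0 < y then (hinv E (h E s + derive1 (u E m c) y))%:E else +oo%E.

Definition prio (mu : agent E -> auth E) (c : auth E) (t : agent E) : \bar R :=
  Astar (group E t) c (xmeas mu (group E t) c) (score E t).

Definition demand (mu : agent E -> auth E) (c : auth E) : set (agent E) :=
  [set t | (rank E t c <= rank E t (mu t))%N].

Definition Astar_choice (mu : agent E -> auth E) (c : auth E) : Prop :=
  (forall t, demand mu c t ->
     (mu t = c <-> forall t', demand mu c t' -> mu t' != c ->
                    (prio mu c t' < prio mu c t)%E)) /\
  omega E (admitted mu c) = mine (cap E c)%:E (omega E (demand mu c)).

Definition Astar_outcome (mu : agent E -> auth E) : Prop :=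
  is_matching mu /\ forall c, c != c0 E -> Astar_choice mu c.

End Model.

(* Main.v *)
Require Import Defs.
From HB Require Import structures.
From mathcomp Require Import all_boot all_order all_algebra.
From mathcomp Require Import all_classical all_reals all_analysis.
From mathcomp Require Import ring lra.
From mathcomp Require Import lra.
Import Order.TTheory GRing.Theory Num.Theory.
Import numFieldNormedType.Exports.
Local Open Scope ring_scope.
Local Open Scope classical_set_scope.
Section S.
Variable R : realType.

Definition Uk (k : R) (x : R) : R := k * Num.sqrt x.

Lemma sqrt_sc : strictly_concave_nonneg (@Num.sqrt R).
Proof.
move=> x y t x0 y0 xy t0 t1.
set a := Num.sqrt x; set b := Num.sqrt y.
have a0 : 0 <= a by exact: sqrtr_ge0.
have b0 : 0 <= b by exact: sqrtr_ge0.
have ex : x = a ^+ 2 by rewrite sqr_sqrtr.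
have ey : y = b ^+ 2 by rewrite sqr_sqrtr.
have ab : a != b by apply: contra xy => /eqP e; rewrite ex ey e.
have L0 : 0 <= t * a + (1 - t) * b.
  by apply: addr_ge0; apply: mulr_ge0 => //; rewrite ?subr_ge0 ltW.
have hab : 0 < (a - b) ^+ 2 by rewrite lt_neqAle sqr_ge0 andbT eq_sym sqrf_eq0 subr_eq0.
have htt : 0 < t * (1 - t) by rewrite mulr_gt0 // subr_gt0.
have key : (t * a + (1 - t) * b) ^+ 2 < t * x + (1 - t) * y.
  rewrite ex ey -subr_gt0.
  have -> : t * a ^+ 2 + (1 - t) * b ^+ 2 - (t * a + (1 - t) * b) ^+ 2
           = t * (1 - t) * (a - b) ^+ 2 by ring.
  exact: mulr_gt0.
have p : 0 < t * x + (1 - t) * y by apply: le_lt_trans key; exact: sqr_ge0.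
rewrite -[X in X < _]ger0_norm // -sqrtr_sqr ltr_sqrt //.
Qed.

Lemma Uk_sc (k : R) : 0 < k -> strictly_concave_nonneg (Uk k).
Proof.
move=> k0 x y t x0 y0 xy t0 t1; rewrite /Uk.
have := @sqrt_sc x y t x0 y0 xy t0 t1.
rewrite -(ltr_pM2l k0) mulrDr !mulrA ![k * t]mulrC ![k * (1 - t)]mulrC.
by rewrite -!mulrA.
Qed.

Lemma Uk_der (k x : R) : 0 < x -> is_derive x 1 (Uk k) (k * (2 * Num.sqrt x)^-1).
Proof.
move=> x0.
have := is_deriveZ k (is_derive1_sqrt x0).
by [].
Qed.

Lemma Uk_diff (k x : R) : 0 < x -> derivable (Uk k) x 1.
Proof. by move=> x0; apply: ex_derive; apply: Uk_der. Qed.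

Lemma Uk_inada (k : R) : 0 < k -> derive1 (Uk k) x @[x --> 0^'+] --> +oo.
Proof.
move=> k0; apply/cvgryPge => A.
have [A0|A0] := lerP A 0.
  near=> x.
  have x0 : 0 < x by near: x; exact: nbhs_right_gt.
  rewrite derive1E (@derive_val _ _ _ _ _ _ _ (Uk_der k x x0)).
  apply: (le_trans A0); apply: mulr_ge0; first exact: ltW.
  by rewrite invr_ge0 mulr_ge0 // sqrtr_ge0.
have d0 : 0 < (k / (2 * A)) ^+ 2 by rewrite exprn_gt0 // divr_gt0 // mulr_gt0.
near=> x.
have x0 : 0 < x by near: x; exact: nbhs_right_gt.
have xd : x < (k / (2 * A)) ^+ 2 by near: x; exact: nbhs_right_lt.
rewrite derive1E (@derive_val _ _ _ _ _ _ _ (Uk_der k x x0)).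
have sx : 0 < Num.sqrt x by rewrite sqrtr_gt0.
have : Num.sqrt x < k / (2 * A).
  rewrite -(ltr_sqrt _ d0) in xd.
  by rewrite sqrtr_sqr ger0_norm ?ltW // divr_gt0 // mulr_gt0 in xd.
rewrite ltr_pdivlMr ?mulr_gt0 // => h.
rewrite -/(k / _) ler_pdivlMr ?mulr_gt0 //.
nra.
Unshelve. all: by end_near.
Qed.

Definition kk (c : 'I_3) : R := if val c == 2%N then 2 else 1.
Lemma kk_gt0 c : 0 < kk c. Proof. by rewrite /kk; case: ifP. Qed.
Definition rk (t : unit) (c : 'I_3) : nat := if c == ord0 then 3%N else val c.

Lemma rk_inj t : injective (rk t).
Proof.
by move=> [[|[|[|?]]] ?] [[|[|[|?]]] ?] //= _; apply: val_inj.
Qed.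

Lemma rk_worst t c : c != ord0 -> (rk t c < rk t ord0)%N.
Proof. by move=> /negbTE h; rewrite /rk h eqxx ltn_ord. Qed.

Lemma id_cont : continuous (fun x : R => x).
Proof. by move=> x; exact: cvg_id. Qed.

Definition E0 : economy R :=
  @Economy R _ unit [the {finite_measure set unit -> \bar R} of @dirac _ unit tt R]
    ('I_3 : finType) ord0 unit (fun _ => 1) (fun _ => 0) (fun _ => tt) rk
    (fun x => x) (fun x => x) (fun _ c => Uk (kk c))
    (fun _ => ler01) (measurable_cst _) (fun _ => I) (fun _ _ => I)
    rk_inj (fun t c => @rk_worst t c) id_cont (fun _ _ => erefl) (fun _ => erefl) (fun _ => erefl)
    (finite_measure_integrable_cst _ _ measurableT)
    (fun _ c => @Uk_sc (kk c) (kk_gt0 c)) (fun _ c x => @Uk_diff (kk c) x)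
    (fun _ c => @Uk_inada (kk c) (kk_gt0 c)).

Definition c1 : 'I_3 := @Ordinal 3 1 isT.
Definition c2 : 'I_3 := @Ordinal 3 2 isT.

Lemma mem_adm (mu : unit -> 'I_3) c : (tt \in admitted (E:=E0) mu c) = (mu tt == c).
Proof.
apply/idP/eqP => [/set_mem //|h]; exact: mem_set.
Qed.


Lemma xmeasE (mu : unit -> 'I_3) m c : xmeas (E:=E0) mu m c = (mu tt == c)%:R.
Proof.
rewrite /xmeas /= indicE.
case: eqP => h.
  by rewrite mem_set //; split => //; case: m.
by rewrite memNset // => -[].
Qed.
Lemma xiE (mu : unit -> 'I_3) c : xi (E:=E0) mu c = Uk (kk c) (mu tt == c)%:R.
Proof.
rewrite /xi /sbar /= integral0_eq //= add0r.
rewrite (big_pred1 tt) ?xmeasE //; by case.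
Qed.

Lemma totalE (mu : unit -> 'I_3) : total_value (E:=E0) mu =
   Uk (kk c1) (mu tt == c1)%:R + Uk (kk c2) (mu tt == c2)%:R.
Proof.
rewrite /total_value big_mkcond !big_ord_recl big_ord0 /= !xiE.
have -> : lift ord0 ord0 = c1 :> 'I_3 by apply: val_inj.
have -> : lift ord0 (lift ord0 ord0) = c2 :> 'I_3 by apply: val_inj.
by rewrite add0r addr0.
Qed.

Lemma matchingE (mu : unit -> 'I_3) : is_matching (E:=E0) mu.
Proof.
split => // c _; rewrite /= diracE lee_fin.
by case: (_ \in _); rewrite ?lexx ?ler01.
Qed.


Lemma rk_ge1 t c : (1 <= rk t c)%N.
Proof. by rewrite /rk; case: eqP => // /eqP; rewrite -(inj_eq val_inj) /= lt0n. Qed.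

Lemma mu0_outcome : Astar_outcome (E:=E0) (fun _ => c1).
Proof.
split; first exact: matchingE.
move=> [[|[|[|?]]] ?] //= _.
- rewrite (_ : Ordinal _ = c1); last exact: val_inj.
  split.
    by move=> t _; split => // _ t' _; rewrite eqxx.
  by rewrite /= !diracE !mem_set //= minxx.
- split.
    by move=> t; rewrite /demand /= /rk /=.
  rewrite /= !diracE !memNset.
  - by rewrite mulr0n min_r // lee_fin ler01.
  - by rewrite /demand /=.
  - by move=> /(congr1 val).
Qed.

Lemma outcome_c1 (mu : unit -> 'I_3) : Astar_outcome (E:=E0) mu -> mu tt = c1.
Proof.
move=> [_ /(_ c1 isT) [_]].
rewrite /= !diracE (@mem_set _ (demand (E:=E0) mu c1) tt); last exact: rk_ge1.
rewrite minxx.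
have [//|ne] := eqVneq (mu tt) c1.
rewrite memNset; last by move=> /= /eqP; rewrite (negbTE ne).
by move=> /eqP; rewrite eqe mulr0n eq_sym oner_eq0.
Qed.
End S.

Theorem proposition6 (R : realType) :
  exists E : economy R,
    (exists mu : agent E -> auth E, Astar_outcome mu) /\
    (forall mu : agent E -> auth E, Astar_outcome mu ->
       exists nu : agent E -> auth E, is_matching nu /\ total_value mu < total_value nu).
Proof.
exists (E0 R); split; first by exists (fun _ => c1); exact: mu0_outcome.
move=> mu /outcome_c1 h; exists (fun _ => c2); split; first exact: matchingE.
rewrite !totalE h eqxx /= /Uk /kk /= sqrtr0 sqrtr1 !mulr0 !mulr1 add0r addr0.
lra.
Qed.
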